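(* For any voter matrix $V$, $r_V\ge \frac13$.
   Context: A voter matrix with $t$ topics is a matrix $V\in\{Y,N\}^{n\times t}$ for positive integers $n,t$ (rows are voters), subject to the standing assumption that in every column the number of entries $Y$ is at least the number of entries $N$. A proposal is a vector $p\in\{Y,N\}^t$. A voter $v$ supports $p$ if the Hamming distance between $v$ and $p$ is at most $t/2$; $p$ is supported by $V$ if at least $n/2$ rows of $V$ support $p$. For $i=1,\dots,t$ let $m_i$ be the fraction of entries $Y$ in column $i$ of $V$, and $m_V=\frac1t\sum_i m_i$. For a proposal $p$ let $m_i'=m_i$ if $p_i=Y$ and $m_i'=1-m_i$ if $p_i=N$; set $R_p=\frac1t\sum_i m_i'$ and $r_p=R_p/m_V$. $r_V$ is the maximum of $r_p$ over all proposals $p$ supported by $V$. *)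

(* Defs.v *)
(* Y is encoded as [true], N as [false]. *)
From mathcomp Require Import all_boot all_order all_algebra.
Set Implicit Arguments. Unset Strict Implicit. Unset Printing Implicit Defensive.
Import Order.TTheory GRing.Theory Num.Theory.
Local Open Scope ring_scope.

(* A voter matrix: n voters (rows), t topics (columns), entries Y/N. *)
Definition vmatrix (n t : nat) := 'M[bool]_(n, t).
Definition proposal (t : nat) := 'I_t -> bool.

Definition voter_matrix (n t : nat) (V : vmatrix n t) : Prop :=
  forall j : 'I_t, (#|[set i | ~~ V i j]| <= #|[set i | V i j]|)%N.

Definition hamming (n t : nat) (V : vmatrix n t) (i : 'I_n) (p : proposal t) : nat :=
  #|[set j | V i j != p j]|.

Definition supports (n t : nat) (V : vmatrix n t) (i : 'I_n) (p : proposal t) : bool :=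
  (2 * hamming V i p <= t)%N.

Definition supported (n t : nat) (V : vmatrix n t) (p : proposal t) : bool :=
  (n <= 2 * #|[set i | supports V i p]|)%N.

Definition mcol (n t : nat) (V : vmatrix n t) (j : 'I_t) : rat :=
  (#|[set i | V i j]|)%:R / n%:R.

Definition mV (n t : nat) (V : vmatrix n t) : rat :=
  (\sum_(j < t) mcol V j) / t%:R.

Definition Rp (n t : nat) (V : vmatrix n t) (p : proposal t) : rat :=
  (\sum_(j < t) (if p j then mcol V j else 1 - mcol V j)) / t%:R.

Definition rp (n t : nat) (V : vmatrix n t) (p : proposal t) : rat :=
  Rp V p / mV V.

(* Main.v *)
Require Import Defs.
From mathcomp Require Import all_boot all_order all_algebra.
From mathcomp Require Import ring lra zify.
Import Order.TTheory GRing.Theory Num.Theory.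
Local Open Scope ring_scope.

Lemma divt (f : nat -> rat) lo hi T : lo <= f 0%N -> f T <= hi ->
  (forall k, (k < T)%N -> hi < f k -> lo <= f k.+1) ->
  exists k, (k <= T)%N /\ lo <= f k <= hi.
Proof.
move=> h0 hT hs.
suff H : forall d m, (m + d = T)%N -> lo <= f m ->
   exists k, (k <= T)%N /\ lo <= f k <= hi by exact: (H T 0%N).
elim=> [|d IH] m hmd hm.
- exists m; split; first lia.
  rewrite hm /=; rewrite addn0 in hmd; by rewrite hmd.
- case: (leP (f m) hi) => h.
  + exists m; split; [lia| by rewrite hm h].
  + apply: (IH m.+1); first lia.
    apply: hs => //; lia.
Qed.

Lemma mcol_bounds n t (V : vmatrix n t) (hn : (0 < n)%N) (hV : voter_matrix V) j :
  1/2 <= mcol V j /\ mcol V j <= 1.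
Proof.
have hC := cardsC [set i | V i j].
have e : ~: [set i | V i j] = [set i | ~~ V i j].
  by apply/setP => i; rewrite !inE.
rewrite e in hC.
rewrite card_ord in hC.
have := hV j.
rewrite /mcol.
have hn' : (0 : rat) < n%:R by rewrite ltr0n.
set y := #|[set i | V i j]| in hC *.
set z := #|[set i | ~~ V i j]| in hC *.
move=> hyz.
have e1 : n%:R <= 2 * y%:R :> rat.
  have : (n <= 2 * y)%N by lia.
  by rewrite -(ler_nat rat) natrM.
have e2 : y%:R <= n%:R :> rat by rewrite ler_nat; lia.
split.
- rewrite ler_pdivlMr //; lra.
- rewrite ler_pdivrMr //; lra.
Qed.

Lemma supp_or n t (V : vmatrix n t) (p : proposal t) :
  supported V p \/ supported V (fun j => ~~ p j).
Proof.
rewrite /supported.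
set A := [set i | supports V i p].
set B := [set i | supports V i (fun j => ~~ p j)].
have hU : A :|: B = setT.
  apply/setP => i; rewrite !inE /supports /hamming.
  have hc := cardsC [set j | V i j != p j].
  have e : ~: [set j | V i j != p j] = [set j | V i j != ~~ p j].
    by apply/setP => j; rewrite !inE; case: (V i j); case: (p j).
  rewrite e in hc.
  rewrite card_ord in hc.
  apply/orP. lia.
have := cardsU A B.
rewrite hU cardsT card_ord => h.
have := leq_subr #|A :&: B| (#|A| + #|B|).
lia.
Qed.

Lemma split3 t (k : 'I_t) (F : 'I_t -> rat) :
  \sum_j F j = \sum_(j : 'I_t | (j < k)%N) F j + F k + \sum_(j : 'I_t | (k < j)%N) F j.
Proof.
rewrite (bigD1 k) //= (bigID (fun j : 'I_t => (j < k)%N)) /=.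
rewrite (eq_bigl (fun j : 'I_t => (j < k)%N)); last first.
  move=> j; rewrite -(inj_eq val_inj) /=; case: ltngtP => //.
rewrite [X in _ + (_ + X)](eq_bigl (fun j : 'I_t => (k < j)%N)); last first.
  move=> j; rewrite -(inj_eq val_inj) /=; case: ltngtP => //.
by rewrite addrCA addrA.
Qed.

Arguments split3 {t}.

Lemma sum_bounds t (P : pred 'I_t) (F : 'I_t -> rat) :
  (forall j, 1/2 <= F j /\ F j <= 1) ->
  (\sum_(j | P j) 1) / 2 <= \sum_(j | P j) F j /\ \sum_(j | P j) F j <= \sum_(j | P j) 1.
Proof.
move=> hF; split.
- rewrite mulr_suml; apply: ler_sum => j _; have := hF j; lra.
- apply: ler_sum => j _; have := hF j; lra.
Qed.

Arguments sum_bounds {t}.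

Lemma sum_ge0 t (P : pred 'I_t) : 0 <= \sum_(j | P j) (1 : rat).
Proof. by apply: sumr_ge0 => j _. Qed.

Arguments sum_ge0 {t}.

Lemma step n t (V : vmatrix n t) (hn : (0 < n)%N) (hV : voter_matrix V)
  (ht2 : (2 <= t)%N) k (hk : (k < t)%N) :
  t%:R - (\sum_(j : 'I_t) mcol V j) / 3 <
    \sum_(j : 'I_t) (if (k <= j)%N then mcol V j else 1 - mcol V j) ->
  (\sum_(j : 'I_t) mcol V j) / 3 <=
    \sum_(j : 'I_t) (if (k.+1 <= j)%N then mcol V j else 1 - mcol V j).
Proof.
set a := mcol V.
set kk : 'I_t := Ordinal hk.
have ht : t%:R = \sum_(j < t) (1 : rat) by rewrite sumr_const card_ord.
rewrite ht (split3 kk a) (split3 kk (fun _ => 1)).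
rewrite (split3 kk (fun j : 'I_t => if (k <= j)%N then a j else 1 - a j)).
rewrite (split3 kk (fun j : 'I_t => if (k.+1 <= j)%N then a j else 1 - a j)) /=.
rewrite leqnn ltnn.
have e1 : \sum_(j : 'I_t | (j < k)%N) (if (k <= j)%N then a j else 1 - a j)
   = \sum_(j : 'I_t | (j < k)%N) (1 - a j).
  by apply: eq_bigr => j hj; rewrite leqNgt hj.
have e2 : \sum_(j : 'I_t | (j < k)%N) (if (k.+1 <= j)%N then a j else 1 - a j)
   = \sum_(j : 'I_t | (j < k)%N) (1 - a j).
  by apply: eq_bigr => j hj; rewrite leqNgt ltnS ltnW.
have e3 : \sum_(j : 'I_t | (k < j)%N) (if (k <= j)%N then a j else 1 - a j)
   = \sum_(j : 'I_t | (k < j)%N) a j.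
  by apply: eq_bigr => j hj; rewrite ltnW.
have e4 : \sum_(j : 'I_t | (k < j)%N) (if (k.+1 <= j)%N then a j else 1 - a j)
   = \sum_(j : 'I_t | (k < j)%N) a j.
  by apply: eq_bigr => j hj; rewrite hj.
rewrite e1 e2 e3 e4.
rewrite !sumrB.
have hb : forall j, 1/2 <= a j /\ a j <= 1 by move=> j; exact: mcol_bounds.
have [hB1 hB2] := sum_bounds (fun j : 'I_t => (j < k)%N) a hb.
have [hC1 hC2] := sum_bounds (fun j : 'I_t => (k < j)%N) a hb.
have hc0 := sum_ge0 (fun j : 'I_t => (j < k)%N).
have hd0 := sum_ge0 (fun j : 'I_t => (k < j)%N).
have [ha1 ha2] := hb kk.
move: hB1 hB2 hC1 hC2 hc0 hd0 ha1 ha2.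
set B := \sum_(j : 'I_t | (j < k)%N) a j.
set C := \sum_(j : 'I_t | (k < j)%N) a j.
set c := \sum_(j : 'I_t | (j < k)%N) (1 : rat).
set d := \sum_(j : 'I_t | (k < j)%N) (1 : rat).
set ak := a kk.
move=> hB1 hB2 hC1 hC2 hc0 hd0 ha1 ha2 H.
have htr : 2 <= c + 1 + d.
  by rewrite -(split3 kk (fun _ => 1)) -ht (ler_nat rat 2 t).
case: (leqP 3 t) => h3.
  have : 3 <= c + 1 + d.
    by rewrite -(split3 kk (fun _ => 1)) -ht (ler_nat rat 3 t).
  lra.
case: (posnP k) => hk0.
  have hc : c = 0.
    by rewrite /c big_pred0 // => j; rewrite hk0 ltn0.
  lra.
have hd : d = 0.
  rewrite /d big_pred0 // => j /=; apply/negbTE; rewrite -leqNgt.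
  have := ltn_ord j; lia.
lra.
Qed.

Lemma col_half n t (V : vmatrix n t) (hV : voter_matrix V) j :
  (n <= 2 * #|[set i | V i j]|)%N.
Proof.
have hC := cardsC [set i | V i j].
have e : ~: [set i | V i j] = [set i | ~~ V i j].
  by apply/setP => i; rewrite !inE.
rewrite e card_ord in hC.
have := hV j; lia.
Qed.

Theorem lemma5p1 (n t : nat) (hn : (0 < n)%N) (ht : (0 < t)%N)
  (V : vmatrix n t) (hV : voter_matrix V) :
  exists p : proposal t, supported V p /\ 1 / 3%:R <= rp V p.
Proof.
set a := mcol V.
have hb : forall j, 1/2 <= a j /\ a j <= 1 by move=> j; exact: mcol_bounds.
set A := \sum_(j : 'I_t) a j.
have htp : (0 : rat) < t%:R by rewrite ltr0n.
have hA1 : t%:R / 2 <= A.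
  have : \sum_(j : 'I_t) (1/2 : rat) <= A by apply: ler_sum => j _; have := hb j; lra.
  rewrite sumr_const card_ord -mulr_natr; lra.
have hA2 : A <= t%:R.
  have : A <= \sum_(j : 'I_t) (1 : rat) by apply: ler_sum => j _; have := hb j; lra.
  by rewrite sumr_const card_ord.
case: (leqP 2 t) => ht2.
- set f := fun k : nat => \sum_(j : 'I_t) (if (k <= j)%N then mcol V j else 1 - mcol V j).
  have f0 : f 0%N = A by apply: eq_bigr.
  have ft : f t = t%:R - A.
    rewrite /f (eq_bigr (fun j => 1 - a j)); last first.
      by move=> j _; rewrite leqNgt ltn_ord.
    by rewrite sumrB sumr_const card_ord.
  have [k [hk /andP [hk1 hk2]]] : exists k, (k <= t)%N /\ A / 3 <= f k <= t%:R - A / 3.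
    apply: divt; first by rewrite f0; lra.
      by rewrite ft; lra.
    move=> k hk H; exact: (@step n t V hn hV ht2 k hk H).
  set p : proposal t := fun j : 'I_t => (k <= j)%N.
  have hRp : Rp V p = f k / t%:R by [].
  have hRq : Rp V (fun j => ~~ p j) = (t%:R - f k) / t%:R.
    rewrite /Rp; congr (_ / _).
    have -> : t%:R = \sum_(j : 'I_t) (1 : rat) by rewrite sumr_const card_ord.
    rewrite /f -sumrB.
    by apply: eq_bigr => j _; rewrite /p; case: (k <= j)%N => /=; ring.
  have hmV : mV V = A / t%:R by [].
  have hAp : 0 < A by lra.
  case: (supp_or _ _ V p) => hs; [exists p | exists (fun j => ~~ p j)]; split => //.
  + rewrite /rp hRp hmV.
    have -> : f k / t%:R / (A / t%:R) = f k / A.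
      field; apply/andP; split; lra.
    rewrite ler_pdivlMr //; lra.
  + rewrite /rp hRq hmV.
    have -> : (t%:R - f k) / t%:R / (A / t%:R) = (t%:R - f k) / A.
      field; apply/andP; split; lra.
    rewrite ler_pdivlMr //; lra.
- have t1 : t = 1%N by lia.
  exists (fun _ => true); split.
  + rewrite /supported.
    have j0 : 'I_t by rewrite t1; exact: ord0.
    apply: (leq_trans (col_half _ _ V hV j0)).
    rewrite leq_mul2l /=; apply: subset_leq_card.
    apply/subsetP => i; rewrite !inE => hi.
    rewrite /supports /hamming.
    have -> : [set j | V i j != true] = set0.
      apply/setP => j; rewrite !inE.
      have -> : j = j0 by apply: ord_inj; have := ltn_ord j; have := ltn_ord j0; lia.
      by rewrite hi.
    by rewrite cards0.
  + rewrite /rp (_ : Rp V (fun _ => true) = mV V) //.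
    have hmV : mV V = A / t%:R by [].
    rewrite divff; first lra.
    rewrite hmV; apply/negP => /eqP h.
    have : 0 < A / t%:R by apply: divr_gt0; lra.
    lra.
Qed.
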